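(* Let $S$ and $T$ be finite sets and let $L:\{0,1\}^S\to\{0,1\}$ be a monotone Boolean function. Let $\psi:S\to T$ be a function such that $$|\psi(A)|=|A|\quad\text{for every minimal one-set } A \text{ of } L.$$ Let $X=(X(i))_{i\in S}$ and $Y=(Y(j))_{j\in T}$ be i.i.d. collections of Boolean random variables with intensity $p\in[0,1]$. Then $$\mathbb P[L(Y\circ\psi)=1]\leq \mathbb P[L(X)=1].$$ Similarly, if $|\psi(Z)|=|Z|$ for every minimal zero-set $Z$ of $L$, then $\mathbb P[L(Y\circ\psi)=1]\geq \mathbb P[L(X)=1]$.
   Context: - $L$ is monotone if $x\leq y$ pointwise implies $L(x)\leq L(y)$. - A one-set of $L$ is a set $A\subset S$ with $L(1_A)=1$; a zero-set is a set $Z\subset S$ with $L(1-1_Z)=0$. A one-set (zero-set) is minimal if it contains no other one-set (zero-set) as a proper subset. - ''I.i.d. with intensity $p$'' means independent with $\mathbb P[X(i)=1]=p$. - $(Y\circ\psi)(i)=Y(\psi(i))$ for $i\in S$. *)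

(* Defs.v *)
From mathcomp Require Import all_boot all_order all_algebra.
Set Implicit Arguments. Unset Strict Implicit. Unset Printing Implicit Defensive.
Import Order.TTheory GRing.Theory Num.Theory.
Local Open Scope ring_scope.

Definition monotone (S : finType) (L : {ffun S -> bool} -> bool) : Prop :=
  forall x y : {ffun S -> bool}, (forall i, x i <= y i)%N -> (L x <= L y)%N.

Definition ind (S : finType) (A : {set S}) : {ffun S -> bool} := [ffun i => i \in A].
Definition coind (S : finType) (Z : {set S}) : {ffun S -> bool} := [ffun i => i \notin Z].

Definition one_set (S : finType) (L : {ffun S -> bool} -> bool) (A : {set S}) : Prop :=
  L (ind A) = true.
Definition zero_set (S : finType) (L : {ffun S -> bool} -> bool) (Z : {set S}) : Prop :=
  L (coind Z) = false.

Definition minimal_one_set (S : finType) (L : {ffun S -> bool} -> bool) (A : {set S}) : Prop :=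
  one_set L A /\ forall B : {set S}, B \proper A -> ~ one_set L B.
Definition minimal_zero_set (S : finType) (L : {ffun S -> bool} -> bool) (Z : {set S}) : Prop :=
  zero_set L Z /\ forall B : {set S}, B \proper Z -> ~ zero_set L B.

(* Law of an i.i.d. Bernoulli(p) family indexed by a finite set I:
   P[X = x] = prod_i (p if x i else 1 - p). *)
Definition bern_weight (R : pzRingType) (I : finType) (p : R) (x : {ffun I -> bool}) : R :=
  \prod_(i : I) (if x i then p else 1 - p).

Definition iid_prob (R : pzRingType) (I : finType) (p : R) (E : {ffun I -> bool} -> bool) : R :=
  \sum_(x : {ffun I -> bool} | E x) bern_weight p x.

Definition compose_conf (S T : finType) (psi : S -> T) (y : {ffun T -> bool}) : {ffun S -> bool} :=
  [ffun i => y (psi i)].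

(* Main.v *)
Require Import Defs.
From mathcomp Require Import all_boot all_order all_algebra.
From mathcomp Require Import ring lra.
Set Implicit Arguments. Unset Strict Implicit. Unset Printing Implicit Defensive.
Import Order.TTheory GRing.Theory Num.Theory.
Local Open Scope ring_scope.

Section Exp.
Variable R : realFieldType.
Variable p : R.

Definition wt (b : bool) : R := if b then p else 1 - p.

Definition Exp (V : finType) (H : {ffun V -> bool} -> R) : R :=
  \sum_y bern_weight p y * H y.

Definition setc (V : finType) (y : {ffun V -> bool}) (c : V) (t : bool) : {ffun V -> bool} :=
  [ffun v => if v == c then t else y v].

Lemma setc_same (V : finType) (y : {ffun V -> bool}) c s t : setc (setc y c s) c t = setc y c t.
Proof. by apply/ffunP => v; rewrite !ffunE; case: eqP. Qed.

Lemma setc_id (V : finType) (y : {ffun V -> bool}) c : setc y c (y c) = y.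
Proof. by apply/ffunP => v; rewrite !ffunE; case: eqP => // ->. Qed.

Lemma setc_comm (V : finType) (y : {ffun V -> bool}) a b s t : a != b ->
  setc (setc y a s) b t = setc (setc y b t) a s.
Proof.
move=> ab; apply/ffunP => v; rewrite !ffunE.
case: (eqVneq v a) => [->|//]; by rewrite (negPf ab).
Qed.

Definition wc (V : finType) (c : V) (y : {ffun V -> bool}) : R :=
  \prod_(i | i != c) wt (y i).

Lemma bw_split (V : finType) (c : V) y : bern_weight p y = wt (y c) * wc c y.
Proof. by rewrite /bern_weight (bigD1 c). Qed.

Lemma wc_setc (V : finType) (c : V) y t : wc c (setc y c t) = wc c y.
Proof. by apply: eq_bigr => i ic; rewrite ffunE (negPf ic). Qed.

Lemma sum_flip (V : finType) (c : V) (F : {ffun V -> bool} -> R) :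
  \sum_(y : {ffun V -> bool} | y c) F y = \sum_(y : {ffun V -> bool} | ~~ y c) F (setc y c true).
Proof.
have inv : involutive (fun y : {ffun V -> bool} => setc y c (~~ y c)).
  by move=> y; rewrite setc_same ffunE eqxx negbK setc_id.
rewrite (reindex_inj (inv_inj inv)) /=.
apply: eq_big => y; first by rewrite ffunE eqxx.
by rewrite ffunE eqxx => /negPf ->.
Qed.

Definition M (V : finType) (c : V) t (K : {ffun V -> bool} -> R) :=
  \sum_(y : {ffun V -> bool} | ~~ y c) wc c y * K (setc y c t).

Lemma Exp_M (V : finType) (c : V) K : Exp K = p * M c true K + (1 - p) * M c false K.
Proof.
rewrite /Exp (bigID (fun y : {ffun V -> bool} => y c)) /= sum_flip /M !mulr_sumr; congr (_ + _).
  apply: eq_bigr => y _; rewrite (bw_split c) wc_setc ffunE eqxx /wt; ring.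
apply: eq_bigr => y /negPf yc; rewrite (bw_split c) /wt yc.
have -> : setc y c false = y by rewrite -yc setc_id.
ring.
Qed.

Lemma Exp_cond (V : finType) (c : V) K :
  Exp K = p * Exp (fun y => K (setc y c true)) + (1 - p) * Exp (fun y => K (setc y c false)).
Proof.
have E t : Exp (fun y => K (setc y c t)) = M c t K.
  rewrite (Exp_M c) /M.
  under eq_bigr do rewrite setc_same.
  under [in X in _ + _ * X]eq_bigr do rewrite setc_same.
  ring.
by rewrite !E -Exp_M.
Qed.


Hypothesis p0 : 0 <= p.
Hypothesis p1 : p <= 1.

Lemma bw_ge0 (V : finType) (y : {ffun V -> bool}) : 0 <= bern_weight p y.
Proof. by apply: prodr_ge0 => i _; case: (y i) => //; rewrite subr_ge0. Qed.

Lemma Exp_le (V : finType) (H1 H2 : {ffun V -> bool} -> R) :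
  (forall y, H1 y <= H2 y) -> Exp H1 <= Exp H2.
Proof. by move=> h; apply: ler_sum => y _; apply: (ler_wpM2l (bw_ge0 y)); exact: h. Qed.

Lemma Exp_add (V : finType) (H1 H2 : {ffun V -> bool} -> R) :
  Exp (fun y => H1 y + H2 y) = Exp H1 + Exp H2.
Proof. by rewrite /Exp -big_split; apply: eq_bigr => y _; rewrite mulrDr. Qed.

Lemma two_point_eqs (V : finType) (a b : V) (H : {ffun V -> bool} -> R) : a != b ->
  let E t s := Exp (fun y => H (setc (setc y b s) a t)) in
  Exp H = p * (p * E true true + (1 - p) * E true false)
          + (1 - p) * (p * E false true + (1 - p) * E false false) /\
  Exp (fun y => H (setc y b (y a))) = p * E true true + (1 - p) * E false false.
Proof.
move=> ab E; split.
  by rewrite (Exp_cond a) (Exp_cond b (fun y => H (setc y a true)))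
    (Exp_cond b (fun y => H (setc y a false))).
rewrite (Exp_cond a) /E; congr (_ * _ + _ * _); apply: eq_bigr => y _;
  by rewrite ffunE eqxx setc_comm.
Qed.

Lemma two_point_le (V : finType) (a b : V) (H : {ffun V -> bool} -> R) : a != b ->
  (forall y, H (setc (setc y b true) a true) + H (setc (setc y b false) a false) <=
             H (setc (setc y b false) a true) + H (setc (setc y b true) a false)) ->
  Exp (fun y => H (setc y b (y a))) <= Exp H.
Proof.
move=> ab h; have [-> ->] := two_point_eqs H ab.
have D := Exp_le h; rewrite !Exp_add in D.
have q : 0 <= p * (1 - p) by apply: mulr_ge0; rewrite ?subr_ge0.
nra.
Qed.

Lemma two_point_ge (V : finType) (a b : V) (H : {ffun V -> bool} -> R) : a != b ->
  (forall y, H (setc (setc y b false) a true) + H (setc (setc y b true) a false) <=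
             H (setc (setc y b true) a true) + H (setc (setc y b false) a false)) ->
  Exp H <= Exp (fun y => H (setc y b (y a))).
Proof.
move=> ab h; have [-> ->] := two_point_eqs H ab.
have D := Exp_le h; rewrite !Exp_add in D.
have q : 0 <= p * (1 - p) by apply: mulr_ge0; rewrite ?subr_ge0.
nra.
Qed.


Lemma Exp_marg (T V : finType) (f : T -> V) (H : {ffun T -> bool} -> R) : injective f ->
  Exp (fun y : {ffun V -> bool} => H (compose_conf f y)) = Exp H.
Proof.
move=> finj.
rewrite /Exp (partition_big (fun y : {ffun V -> bool} => compose_conf f y) xpredT) //=.
apply: eq_bigr => x _.
rewrite (eq_bigr (fun y => bern_weight p y * H x)); last by move=> y /= E; rewrite (eqP E).
rewrite -mulr_suml; congr (_ * _).
pose Q (v : V) := fun b : bool => [forall t, (f t == v) ==> (b == x t)].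
rewrite (eq_bigl (fun y => y \in family Q)); last first.
  move=> y /=; apply/idP/idP.
    move=> /eqP E; apply/familyP => v; apply/forallP => t.
    by apply/implyP => /eqP <-; rewrite -E ffunE.
  move=> /familyP fam; apply/eqP/ffunP => t; rewrite ffunE.
  by have := fam (f t) => /forallP/(_ t); rewrite eqxx /= => /eqP.
rewrite /bern_weight -(bigA_distr_big_dep Q (fun v (b : bool) => if b then p else 1 - p)).
rewrite (bigID (fun v => v \in f @: [set: T])) /=.
rewrite [X in _ * X]big1 ?mulr1; last first.
  move=> v vn; rewrite (eq_bigl xpredT); first by rewrite big_bool /=; ring.
  move=> b; apply/forallP => t; apply/implyP => /eqP ftv.
  by move: vn; rewrite -ftv imset_f.
rewrite big_imset /=; last by move=> t1 t2 _ _; apply: finj.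
apply: eq_big => [t|t _]; first by rewrite inE.
rewrite (eq_bigl (pred1 (x t))) ?big_pred1_eq //.
move=> b; rewrite /Q /=; apply/idP/idP => [/forallP/(_ t)|/eqP->]; first by rewrite eqxx.
by apply/forallP => t'; apply/implyP => /eqP /finj ->.
Qed.


End Exp.

Lemma iid_Exp (R : realFieldType) (I : finType) (p : R) (E : {ffun I -> bool} -> bool) :
  iid_prob p E = Exp p (fun x => (E x)%:R).
Proof.
rewrite /iid_prob /Exp big_mkcond; apply: eq_bigr => x _.
by case: (E x); rewrite ?mulr1 ?mulr0.
Qed.

Lemma setc2E (V : finType) (y : {ffun V -> bool}) a b s t v :
  setc (setc y b s) a t v = if v == a then t else if v == b then s else y v.
Proof. by rewrite !ffunE. Qed.

Section Main.
Variables (R : realFieldType) (S T : finType) (L : {ffun S -> bool} -> bool) (psi : S -> T) (p : R).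
Hypothesis monL : monotone L.
Hypothesis p0 : 0 <= p.
Hypothesis p1 : p <= 1.

Definition phi (U : {set S}) (i : S) : (S + T)%type :=
  if i \in U then inl i else inr (psi i).

Definition F (U : {set S}) : R := Exp p (fun y => (L (compose_conf (phi U) y))%:R).

Lemma F0 : F set0 = iid_prob p (fun y : {ffun T -> bool} => L (compose_conf psi y)).
Proof.
rewrite iid_Exp -(@Exp_marg R p T (S + T)%type inr); last by move=> ? ? [].
rewrite /F; apply: eq_bigr => y _; congr (_ * (L _)%:R).
by apply/ffunP => i; rewrite !ffunE /phi inE.
Qed.

Lemma FT : F setT = iid_prob p L.
Proof.
rewrite iid_Exp -(@Exp_marg R p S (S + T)%type inl); last by move=> ? ? [].
rewrite /F; apply: eq_bigr => y _; congr (_ * (L _)%:R).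
by apply/ffunP => i; rewrite !ffunE /phi inE.
Qed.

Lemma phi_ne_b (U : {set S}) (j i : S) : i != j -> phi U i != inl j.
Proof. by move=> ij; rewrite /phi; case: (i \in U) => //=; rewrite inj_eq //; move=> ? ? []. Qed.

Lemma phi_a (U : {set S}) (j i : S) : j \in U -> phi U i = inr (psi j) -> i \notin U /\ psi i = psi j.
Proof. by rewrite /phi; case: (i \in U) => // _ [->]. Qed.

Lemma phij (U : {set S}) (j : S) : j \in U -> phi U j = inl j.
Proof. by rewrite /phi => ->. Qed.

Lemma merge_eq (U : {set S}) (j : S) y : j \in U ->
  compose_conf (phi (U :\ j)) y =
  compose_conf (phi U) (setc y (inl j) (y (inr (psi j)))).
Proof.
move=> jU; apply/ffunP => i; rewrite !ffunE.
case: (eqVneq i j) => [->|ij].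
  by rewrite (phij jU) eqxx /phi !inE eqxx.
rewrite (negPf (phi_ne_b U ij)) /phi !inE ij /=.
by case: (i \in U).
Qed.

Definition g (U : {set S}) (j : S) y t s := L (compose_conf (phi U) (setc (setc y (inl j) s) (inr (psi j)) t)).

Lemma g_mono (U : {set S}) (j : S) y (t s t' s' : bool) : (t <= t')%N -> (s <= s')%N -> (g U j y t s <= g U j y t' s')%N.
Proof.
move=> tt ss; apply: monL => i; rewrite !ffunE.
case: (_ == _) => //; case: (_ == _) => //.
Qed.

Lemma monB (x x' : {ffun S -> bool}) : (forall i, (x i <= x' i)%N) -> L x -> L x'.
Proof. by move=> h Lx; have := monL h; rewrite Lx; case: (L x'). Qed.

Lemma ind_self (x : {ffun S -> bool}) : ind [set i | x i] = x.
Proof. by apply/ffunP => i; rewrite !ffunE inE. Qed.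
Lemma coind_self (x : {ffun S -> bool}) : coind [set i | ~~ x i] = x.
Proof. by apply/ffunP => i; rewrite !ffunE inE negbK. Qed.

Lemma key1 (U : {set S}) (j : S) y : j \in U ->
  (forall A : {set S}, minimal_one_set L A -> #|psi @: A| = #|A|) ->
  g U j y true true -> g U j y true false || g U j y false true.
Proof.
move=> jU hyp g11.
rewrite /g in g11; set x11 := compose_conf _ _ in g11.
have PC : L (ind [set i | x11 i]) by rewrite /= ind_self.
have [A /minsetP [PA minA] AC] := @minset_exists _ (fun B => L (ind B)) _ PC.
have mA : minimal_one_set L A.
  split => // B BA PB; have := minA B PB (proper_sub BA) => E.
  by move: BA; rewrite E properxx.
have /imset_injP injA : #|psi @: A| == #|A| by rewrite hyp.
have Ax i : i \in A -> x11 i by move=> /(subsetP AC); rewrite inE.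
case: (boolP (j \in A)) => jA; [apply/orP; right | apply/orP; left];
  rewrite /g; apply: (monB _ PA) => i; rewrite ffunE;
  case: (boolP (i \in A)) => // iA; have := Ax _ iA; rewrite /x11 !ffunE.
- case: (eqVneq i j) => [->|ij]; first by rewrite phij // eqxx.
  rewrite (negPf (phi_ne_b U ij)).
  case: eqP => [/(phi_a jU) [_ pij]|_]; last by move=> ->.
  by move: ij; rewrite (injA _ _ iA jA pij) eqxx.
- case: (eqVneq i j) => [eij|ij]; first by move: iA; rewrite eij (negPf jA).
  by rewrite (negPf (phi_ne_b U ij)); case: (_ == _) => // ->.
Qed.

Lemma key2 (U : {set S}) (j : S) y : j \in U ->
  (forall Z : {set S}, minimal_zero_set L Z -> #|psi @: Z| = #|Z|) ->
  g U j y true false -> g U j y false true -> g U j y false false.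
Proof.
move=> jU hyp g10 g01; case: (boolP (g U j y false false)) => // g00; exfalso.
rewrite /g in g00; set x00 := compose_conf _ _ in g00.
have PC : ~~ L (coind [set i | ~~ x00 i]) by rewrite /= coind_self.
have [Z /minsetP [PZ minZ] ZC] := @minset_exists _ (fun B => ~~ L (coind B)) _ PC.
have mZ : minimal_zero_set L Z.
  split; first by rewrite /zero_set; apply/negbTE.
  move=> B BZ PB; have := minZ B (negbT PB) (proper_sub BZ) => E.
  by move: BZ; rewrite E properxx.
have /imset_injP injZ : #|psi @: Z| == #|Z| by rewrite hyp.
have Zx i : i \in Z -> ~~ x00 i by move=> /(subsetP ZC); rewrite inE.
have LZ : L (coind Z) = false by apply/negbTE.
case: (boolP (j \in Z)) => jZ.
- suff E : g U j y true false = false by move: g10; rewrite E.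
    apply/negbTE/negP => G; suff : L (coind Z) by rewrite LZ.
    apply: (monB _ G) => i.
    rewrite !ffunE; case: (boolP (i \in Z)) => iZ; last exact: leq_b1.
    have := Zx _ iZ; rewrite /x00 !ffunE.
    case: (eqVneq i j) => [->|ij]; first by rewrite phij // eqxx.
    rewrite (negPf (phi_ne_b U ij)).
    case: eqP => [/(phi_a jU) [_ pij]|]; last by move=> _ /negPf ->.
    by move: ij; rewrite (injZ _ _ iZ jZ pij) eqxx.
- suff E : g U j y false true = false by move: g01; rewrite E.
    apply/negbTE/negP => G; suff : L (coind Z) by rewrite LZ.
    apply: (monB _ G) => i.
    rewrite !ffunE; case: (boolP (i \in Z)) => iZ; last exact: leq_b1.
    have := Zx _ iZ; rewrite /x00 !ffunE.
    case: (eqVneq i j) => [eij|ij]; first by move: iZ; rewrite eij (negPf jZ).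
    rewrite (negPf (phi_ne_b U ij)); by move=> /negPf ->.
Qed.


Lemma Fmerge (U : {set S}) (j : S) : j \in U ->
  F (U :\ j) = Exp p (fun y => (fun z => (L (compose_conf (phi U) z))%:R)
                                 (setc y (inl j) (y (inr (psi j))))).
Proof. by move=> jU; rewrite /F; apply: eq_bigr => y _; rewrite merge_eq. Qed.

Lemma step1 (U : {set S}) (j : S) : j \in U ->
  (forall A : {set S}, minimal_one_set L A -> #|psi @: A| = #|A|) ->
  F (U :\ j) <= F U.
Proof.
move=> jU hyp; rewrite (Fmerge jU).
apply: (two_point_le p0 p1 (a := inr (psi j)) (b := inl j)) => // y.
rewrite -!natrD ler_nat.
have k := key1 (y := y) jU hyp.
have m1 := g_mono U j y (t:=false) (s:=false) (t':=true) (s':=false) isT isT.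
have m2 := g_mono U j y (t:=false) (s:=false) (t':=false) (s':=true) isT isT.
have m3 := g_mono U j y (t:=true) (s:=false) (t':=true) (s':=true) isT isT.
rewrite /g in k m1 m2 m3 *.
move: k m1 m2 m3.
by case: (L _); case: (L _); case: (L _); case: (L _).
Qed.

Lemma step2 (U : {set S}) (j : S) : j \in U ->
  (forall Z : {set S}, minimal_zero_set L Z -> #|psi @: Z| = #|Z|) ->
  F U <= F (U :\ j).
Proof.
move=> jU hyp; rewrite (Fmerge jU).
apply: (two_point_ge p0 p1 (a := inr (psi j)) (b := inl j)) => // y.
rewrite -!natrD ler_nat.
have k := key2 (y := y) jU hyp.
have m1 := g_mono U j y (t:=false) (s:=true) (t':=true) (s':=true) isT isT.
have m2 := g_mono U j y (t:=true) (s:=false) (t':=true) (s':=true) isT isT.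
have m3 := g_mono U j y (t:=false) (s:=false) (t':=true) (s':=false) isT isT.
rewrite /g in k m1 m2 m3 *.
move: k m1 m2 m3.
by case: (L _); case: (L _); case: (L _); case: (L _).
Qed.

Lemma chain1 : (forall A : {set S}, minimal_one_set L A -> #|psi @: A| = #|A|) ->
  forall n (U : {set S}), #|U| = n -> F set0 <= F U.
Proof.
move=> hyp; elim=> [|n IH] U cU; first by move/cards0_eq: cU => ->.
have /set0Pn [j jU] : U != set0 by apply/eqP => U0; move: cU; rewrite U0 cards0.
apply: le_trans (step1 jU hyp); apply: IH.
by move: cU; rewrite (cardsD1 j U) jU add1n => [[]].
Qed.

Lemma chain2 : (forall Z : {set S}, minimal_zero_set L Z -> #|psi @: Z| = #|Z|) ->
  forall n (U : {set S}), #|U| = n -> F U <= F set0.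
Proof.
move=> hyp; elim=> [|n IH] U cU; first by move/cards0_eq: cU => ->.
have /set0Pn [j jU] : U != set0 by apply/eqP => U0; move: cU; rewrite U0 cards0.
apply: le_trans (step2 jU hyp) _; apply: IH.
by move: cU; rewrite (cardsD1 j U) jU add1n => [[]].
Qed.

End Main.

Theorem proposition5 (R : realFieldType) (S T : finType)
    (L : {ffun S -> bool} -> bool) (psi : S -> T) (p : R) :
  monotone L -> 0 <= p -> p <= 1 ->
  ((forall A : {set S}, minimal_one_set L A -> #|psi @: A| = #|A|) ->
     iid_prob p (fun y : {ffun T -> bool} => L (compose_conf psi y))
     <= iid_prob p (fun x : {ffun S -> bool} => L x)) /\
  ((forall Z : {set S}, minimal_zero_set L Z -> #|psi @: Z| = #|Z|) ->
     iid_prob p (fun y : {ffun T -> bool} => L (compose_conf psi y))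
     >= iid_prob p (fun x : {ffun S -> bool} => L x)).
Proof.
move=> monL p0 p1; split => hyp.
  rewrite -F0 -(FT _ psi); exact: (chain1 monL p0 p1 hyp erefl).
rewrite -F0 -(FT _ psi); exact: (chain2 monL p0 p1 hyp erefl).
Qed.
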